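(* Let $q$ be a prime power, $n\ge1$, and let $C=\langle B_r\rangle\oplus\langle B_t\rangle\subseteq\mathbb{F}_q^n$, where $B_r$ ($r\times n$) and $B_t$ ($t\times n$, $t\ge2$) are matrices over $\mathbb{F}_q$ with linearly independent rows, such that $\langle B_r\rangle$ and $\langle B_t\rangle$ are Euclidean orthogonal (i.e. $B_rB_t^T=0$). Suppose $B_t=\begin{pmatrix}B_{t_\ell}\\ B_{t_Q}\end{pmatrix}$ where $B_{t_\ell}$ has $t_\ell$ rows, $\langle B_{t_Q}\rangle\subseteq\langle B_t\rangle^{\perp_e}$, and $Z:=B_{t_\ell}B_{t_\ell}^T$ is a block diagonal matrix whose diagonal blocks are of the form $\begin{pmatrix}0&1\\1&0\end{pmatrix}$ or $(z_i)$ with $z_i\neq0$, and, only in characteristic $2$, possibly one block $\begin{pmatrix}0&1\\1&1\end{pmatrix}$. Let $A=\begin{pmatrix}A_0Z^{-1}&0\\0&A_1\end{pmatrix}$ where $A_0$ is $t_\ell\times t_\ell$ and $A_1$ is $(t-t_\ell)\times(t-t_\ell)$ over $\mathbb{F}_q$, and assume $A$ is invertible and has no eigenvalue in $\mathbb{F}_q$. Let $c=\mathrm{rank}(HH^T)=\dim C-\dim(C\cap C^{\perp_e})$ for a generator matrix $H$ of $C$. Then $D_A$ gives rise to an EAQECC with parameters $[[n,\,n-2r-t+c',\,d';\,c']]_q$ (i.e. $c(D_A)=c'$, $k(D_A)=n-2r-t+c'$, $d(D_A)=d'$), where $$c'=(c-t_\ell)+\tfrac12\mathrm{rank}(A_0-A_0^T)=c-\mathrm{rank}(B_tB_t^T)+\tfrac12\mathrm{rank}(A_0-A_0^T)$$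 and $d'\ge\min\left\{\delta_1,\left\lceil\left(1+\frac1q\right)\delta_2\right\rceil\right\}$ with $\delta_1=d_H(C^{\perp_e})$, $\delta_2=d_H(\langle B_r\rangle^{\perp_e})$.
   Context: $\mathbb{F}_q$ is the finite field with $q$ elements. $x\cdot_e y=\sum_i x_iy_i$ on $\mathbb{F}_q^n$; $V^{\perp_e}$ is the Euclidean dual; $\langle B\rangle$ is the row space of a matrix $B$; $d_H(V)$ is the minimum Hamming weight of a nonzero vector of $V$. On $\mathbb{F}_q^{2n}$, $(x|y)\cdot_s(z|w)=x\cdot_e w-z\cdot_e y$ and $D^{\perp_s}$ is the symplectic dual. The symplectic weight of $(x|y)$ is $\#\{j:(x_j,y_j)\neq(0,0)\}$; $d_s(S)$ is the minimum symplectic weight of a nonzero element of $S$. For a linear code $D\subseteq\mathbb{F}_q^{2n}$: $c(D)=\frac12(\dim D-\dim(D\cap D^{\perp_s}))$, $k(D)=n-\dim D+c(D)$, $d(D)=d_s(D^{\perp_s}\setminus(D\cap D^{\perp_s}))$; $D$ gives rise to an EAQECC with parameters $[[n,k(D),d(D);c(D)]]_q$. $D_A\subseteq\mathbb{F}_q^{2n}$ is the code generated by the rows of $\begin{pmatrix}B_t & AB_t\\ B_r & 0\\ 0 & B_r\end{pmatrix}$. *)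

(* Defs.v *)
From HB Require Import structures.
From mathcomp Require Import all_boot all_order all_algebra.
Set Implicit Arguments. Unset Strict Implicit. Unset Printing Implicit Defensive.
Import Order.TTheory GRing.Theory Num.Theory.
Local Open Scope ring_scope.

Section Defs.
Variable F : finFieldType.

Definition hwt n (v : 'rV[F]_n) : nat := #|[set j : 'I_n | v 0 j != 0]|.

(* d_H(V): minimum Hamming weight of a nonzero vector in the row space of V;
   convention n+1 when the space is zero. *)
Definition dH m n (V : 'M[F]_(m, n)) : nat :=
  \big[minn/n.+1]_(v : 'rV[F]_n | (v <= V)%MS && (v != 0)) hwt v.

Definition edual m n (B : 'M[F]_(m, n)) : 'M[F]_n := kermx B^T.

Definition sprod n (u v : 'rV[F]_(n + n)) : F :=
  (lsubmx u *m (rsubmx v)^T - lsubmx v *m (rsubmx u)^T) 0 0.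

(* J with (u *m J *m v^T) = sprod u v *)
Definition Jmx n : 'M[F]_(n + n) := block_mx 0 1%:M (- 1%:M) 0.

Definition sdual m n (G : 'M[F]_(m, n + n)) : 'M[F]_(n + n) := kermx (Jmx n *m G^T).

Definition swt n (v : 'rV[F]_(n + n)) : nat :=
  #|[set j : 'I_n | (lsubmx v 0 j != 0) || (rsubmx v 0 j != 0)]|.

Definition cD m n (G : 'M[F]_(m, n + n)) : nat :=
  (\rank G - \rank (G :&: sdual G)%MS)./2.
Definition kD m n (G : 'M[F]_(m, n + n)) : int :=
  (n%:Z - (\rank G)%:Z + (cD G)%:Z)%R.
(* "d(D) >= b": every vector of D^{perp_s} \ (D cap D^{perp_s}) has
   symplectic weight at least b (min over the empty set = +infinity) *)
Definition dD_ge m n (G : 'M[F]_(m, n + n)) (b : int) : Prop :=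
  forall v : 'rV[F]_(n + n), (v <= sdual G)%MS -> ~~ (v <= (G :&: sdual G))%MS ->
    (b <= (swt v)%:Z)%R.

Definition DAmx r t n (Br : 'M[F]_(r, n)) (Bt : 'M[F]_(t, n)) (A : 'M[F]_t)
  : 'M[F]_(t + r + r, n + n) :=
  col_mx (col_mx (row_mx Bt (A *m Bt)) (row_mx Br 0)) (row_mx 0 Br).

Inductive zblock := ZHyp | ZDiag of F | ZSpec .
Definition zb_size b := match b with ZDiag _ => 1%N | _ => 2%N end.
Definition zb_entry b (i j : nat) : F :=
  match b with
  | ZHyp => if i == j then 0 else 1
  | ZDiag z => z
  | ZSpec => if (i == 1%N) && (j == 1%N) then 1 else if i == j then 0 else 1
  end.
Fixpoint zblk_fun (bs : seq zblock) (i j : nat) : F :=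
  match bs with
  | [::] => 0
  | b :: bs' => let s := zb_size b in
      if (i < s)%N && (j < s)%N then zb_entry b i j
      else if (s <= i)%N && (s <= j)%N then zblk_fun bs' (i - s) (j - s) else 0
  end.
Definition is_ZSpec b := if b is ZSpec then true else false.
Definition zb_ok b := if b is ZDiag z then z != 0 else true.

Definition admissible_Z m (Z : 'M[F]_m) : Prop :=
  exists bs : seq zblock,
    [/\ sumn (map zb_size bs) = m,
        forall i j : 'I_m, Z i j = zblk_fun bs i j,
        all zb_ok bs,
        (count is_ZSpec bs <= 1)%N &
        (has is_ZSpec bs -> 2%N \in [pchar F])].

End Defs.

(* Main.v *)
Require Import Defs.
From HB Require Import structures.
From mathcomp Require Import all_boot all_order all_algebra.
From mathcomp Require Import zify ring lra.
Set Implicit Arguments. Unset Strict Implicit. Unset Printing Implicit Defensive.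
Import Order.TTheory GRing.Theory Num.Theory.
Local Open Scope ring_scope.

Section Z.
Variable F : finFieldType.

Definition zinv_entry (b : zblock F) (i j : nat) : F :=
  match b with
  | ZHyp => if i == j then 0 else 1
  | ZDiag z => z^-1
  | ZSpec => if (i == 0%N) && (j == 0%N) then -1 else if (i == 1%N) && (j == 1%N) then 0 else 1
  end.
Fixpoint zinv_fun (bs : seq (zblock F)) (i j : nat) : F :=
  match bs with
  | [::] => 0
  | b :: bs' => let s := zb_size b in
      if (i < s)%N && (j < s)%N then zinv_entry b i j
      else if (s <= i)%N && (s <= j)%N then zinv_fun bs' (i - s) (j - s) else 0
  end.

Lemma sum_shift (f : nat -> F) s m : \sum_(s <= k < s + m) f k = \sum_(0 <= k < m) f (k + s).
Proof. by rewrite -{1}(add0n s) big_addn addKn. Qed.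

Lemma zblock_inv (b : zblock F) i j : zb_ok b -> (i < zb_size b)%N -> (j < zb_size b)%N ->
  \sum_(0 <= k < zb_size b) zb_entry b i k * zinv_entry b k j = (i == j)%:R.
Proof.
case: b => [|z|] /= ok.
- by case: i => [|[|i]] // _; case: j => [|[|j]] // _;
     rewrite !big_nat_recr //= big_nil /=; rewrite ?mulr0 ?mul0r ?mulr1 ?add0r ?addr0.
- by case: i => [|i] // _; case: j => [|j] // _;
     rewrite big_nat1 /= mulfV.
- by case: i => [|[|i]] // _; case: j => [|[|j]] // _;
     rewrite !big_nat_recr //= big_nil /=; rewrite ?mulr0 ?mul0r ?mulr1 ?mul1r ?add0r ?addr0 ?addNr.
Qed.

Lemma zblk_inv (bs : seq (zblock F)) i j : all (@zb_ok F) bs ->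
  (i < sumn (map (@zb_size F) bs))%N -> (j < sumn (map (@zb_size F) bs))%N ->
  \sum_(0 <= k < sumn (map (@zb_size F) bs)) zblk_fun bs i k * zinv_fun bs k j = (i == j)%:R.
Proof.
elim: bs i j => [|b bs IH] i j //= /andP[okb okbs] Hi Hj.
set s := zb_size b; set m := sumn _ in Hi Hj IH *.
rewrite (big_cat_nat (n := s)) //= ?leq_addr // (sum_shift _ s).
have s0 : (0 < s)%N by rewrite /s; case: (b).

have kS k : (k + s < s)%N = false by rewrite ltnNge leq_addl.
have kS' k : (s <= k + s)%N by rewrite leq_addl.
case: (ltnP i s) => iS.
- have iS' : (s <= i)%N = false by rewrite leqNgt iS.
  rewrite [X in _ + X = _]big1 ?addr0; last first.
    by move=> k _; rewrite kS ?iS' ?andbF ?andFb /= mul0r.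
  case: (ltnP j s) => jS.
  + rewrite -(zblock_inv okb iS jS); apply: eq_big_nat => k /andP[_ ks].
    by rewrite ?iS ks ?jS.
  + have jS' : (j < s)%N = false by rewrite ltnNge jS.
    rewrite big_nat_cond big1; last first.
      by move=> k /andP[/andP[_ ks] _]; rewrite ?jS' (leqNgt s k) ks ?andbF ?andFb /= mulr0.
    by case: eqP => // ij; move: jS; rewrite -ij leqNgt iS.
- have iS' : (i < s)%N = false by rewrite ltnNge iS.
  rewrite big_nat_cond big1 ?add0r; last first.
    by move=> k /andP[/andP[_ ks] _]; rewrite ?iS' (leqNgt s k) ks ?andbF ?andFb /= mul0r.
  case: (ltnP j s) => jS.
  + have jS' : (s <= j)%N = false by rewrite leqNgt jS.
    rewrite big1; last first.
      by move=> k _; rewrite kS ?jS' ?andbF ?andFb /= mulr0.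
    by case: eqP => // ij; move: jS; rewrite -ij ltnNge iS.
  + have jS' : (j < s)%N = false by rewrite ltnNge jS.
    have Hi' : (i - s < m)%N by rewrite ltn_subLR.
    have Hj' : (j - s < m)%N by rewrite ltn_subLR.
    rewrite -(eqn_sub2rE iS jS) -(IH _ _ okbs Hi' Hj').
    apply: eq_bigr => k _.
    by rewrite kS ?iS' ?jS' kS' ?iS ?jS addnK.
Qed.

Lemma admissible_unit m (Z : 'M[F]_m) : admissible_Z Z -> Z \in unitmx.
Proof.
case=> bs [Hm HZ ok _ _]; subst m.
pose Zi : 'M[F]_(sumn (map (@zb_size F) bs)) := \matrix_(i, j) zinv_fun bs i j.
suff: Z *m Zi = 1%:M by case/mulmx1_unit.
apply/matrixP => i j; rewrite !mxE.
under eq_bigr do rewrite mxE HZ.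
rewrite -(big_mkord xpredT (fun k => zblk_fun bs i k * zinv_fun bs k j)).
by rewrite zblk_inv.
Qed.


Lemma rank_col3 m1 m2 m3 n (X1 : 'M[F]_(m1,n)) (X2 : 'M_(m2,n)) (X3 : 'M_(m3,n)) :
  \rank (col_mx (col_mx X1 X2) X3) = \rank (col_mx (col_mx X1 X3) X2).
Proof.
rewrite -!addsmxE -(adds_eqmx (addsmxE X1 X2) (eqmx_refl X3)).
by rewrite -(adds_eqmx (addsmxE X1 X3) (eqmx_refl X2)) -!addsmxA (addsmxC X2).
Qed.

Lemma rank_GM t r (S : 'M[F]_t) (R : 'M[F]_r) :
  \rank (col_mx (col_mx (row_mx (row_mx S 0) 0) (row_mx (row_mx 0 0) R)) (row_mx (row_mx 0 (-R)) 0))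
  = (\rank S + \rank R + \rank R)%N.
Proof.
rewrite rank_col3.
have -> : col_mx (col_mx (row_mx (row_mx S 0) 0) (row_mx (row_mx 0 (- R)) 0)) (row_mx (row_mx 0 0) R)
   = block_mx (block_mx S 0 0 (-R)) 0 0 R.
  by rewrite [RHS]block_mxEv row_mx0 -col_mx0 -block_mxEh block_mxEv.
by rewrite !rank_diag_block_mx (eqmx_opp R).
Qed.
Lemma bigmin_seq_le (I : eqType) (s : seq I) (P : pred I) (f : I -> nat) k i :
  i \in s -> P i -> (\big[minn/k]_(j <- s | P j) f j <= f i)%N.
Proof.
move=> + Pi; elim: s => [|a s IH] //; rewrite inE big_cons; case/orP => [/eqP<- | /IH h].
  by rewrite Pi geq_minl.
by case: (P a) => //; apply: leq_trans h; exact: geq_minr.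
Qed.

Lemma dH_le m n (V : 'M[F]_(m,n)) v : (v <= V)%MS -> v != 0 -> (dH V <= hwt v)%N.
Proof.
move=> vV nz; rewrite /dH.
apply: (bigmin_seq_le (P := fun w => (w <= V)%MS && (w != 0))); last by rewrite vV nz.
exact: mem_index_enum.
Qed.

Lemma card_setE n (P : 'I_n -> bool) : #|[set j | P j]| = \sum_(j < n) (P j : nat).
Proof.
rewrite -sum1_card big_mkcond /=; apply: eq_bigr => j _; rewrite inE.
by case: (P j).
Qed.

Lemma hwtE n (u : 'rV[F]_n) : hwt u = \sum_(j < n) (nat_of_bool (u 0%R j != 0%R)).
Proof. exact: card_setE. Qed.

Lemma count_key n (x y : 'rV[F]_n) :
  (hwt x + \sum_(l : F) hwt (y - l *: x) = #|F| * #|[set j | (x 0%R j != 0%R) || (y 0%R j != 0%R)]|)%N.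
Proof.
rewrite (eq_bigr (fun l => \sum_(j < n) nat_of_bool ((y - l *: x) 0%R j != 0%R))); last first.
  by move=> l _; rewrite hwtE.
rewrite hwtE.
rewrite exchange_big -big_split /= card_setE big_distrr /=.
apply: eq_bigr => j _.
under eq_bigr do rewrite !mxE.
have F0 : (0 < #|F|)%N by apply/card_gt0P; exists 0.
case: (eqVneq (x 0 j) 0) => [-> | xj0].
  under eq_bigr do rewrite mulr0 subr0.
  by rewrite sum_nat_const /=; congr (_ * _)%N; apply: eq_card.
rewrite (bigD1 (y 0 j / x 0 j)) //= divfK // subrr eqxx /= add0n.
rewrite (eq_bigr (fun _ => 1%N)); last first.
  move=> l ll0; rewrite subr_eq0; case: eqP => // e; move: ll0.
  by rewrite e mulfK // eqxx.
by rewrite sum1_card cardC1 muln1 add1n prednK.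
Qed.

Lemma ceil_bound (q d s : nat) : (0 < q)%N -> ((q + 1) * d <= q * s)%N ->
  Num.ceil ((1 + (q%:Q)^-1) * d%:Q) <= s%:Z.
Proof.
move=> q0 h; rewrite ceil_le_int.
have qQ : 0 < q%:Q by rewrite ltr0n.
have h' : ((q + 1) * d)%:R <= (q * s)%:R :> rat by rewrite ler_nat.
rewrite !natrM natrD in h'.
change ((s%:Z)%:~R) with (s%:R : rat).
have e : q%:Q * ((1 + q%:Q^-1) * d%:Q) = (q%:Q + 1) * d%:Q.
  by field; rewrite gt_eqF.
by rewrite -(ler_pM2l qQ) e.
Qed.
End Z.

Theorem theorem2p6 (F : finFieldType) (n r tl tQ : nat)
  (Br : 'M[F]_(r, n)) (Btl : 'M[F]_(tl, n)) (BtQ : 'M[F]_(tQ, n))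
  (A0 : 'M[F]_tl) (A1 : 'M[F]_tQ) :
  let Bt := col_mx Btl BtQ in
  let Z := Btl *m Btl^T in
  let A := block_mx (A0 *m invmx Z) 0 0 A1 in
  let H := col_mx Br Bt in
  let c := \rank (H *m H^T) in
  let cp := ((c - tl) + (\rank (A0 - A0^T)%R)./2)%N in
  let DA := DAmx Br Bt A in
  (1 <= n)%N -> (2 <= tl + tQ)%N ->
  row_free Br -> row_free Bt ->
  mxdirect (Br + Bt) ->
  Br *m Bt^T = 0 ->
  BtQ *m Bt^T = 0 ->
  admissible_Z Z ->
  A \in unitmx ->
  (forall a : F, ~~ eigenvalue A a) ->
  [/\ cD DA = cp,
      cp = (c - \rank (Bt *m Bt^T) + (\rank (A0 - A0^T)%R)./2)%N,
      kD DA = (n%:Z - (2 * r)%:Z - (tl + tQ)%:Z + cp%:Z)%R &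
      dD_ge DA (Order.min (dH (edual H))%:Z
                  (Num.ceil ((1 + (#|F|%:Q)^-1) * (dH (edual Br))%:Q)))].
Proof.
move=> Bt Z A H c cp DA hn ht frBr frBt dir BrBt BtQBt adm Aunit noeig.
have Zu : Z \in unitmx := admissible_unit adm.
have Zsym : Z^T = Z by rewrite /Z trmx_mul trmxK.
have [BtQBtl BtQBtQ] : BtQ *m Btl^T = 0 /\ BtQ *m BtQ^T = 0.
  by apply/eq_row_mx; rewrite -mul_mx_row -tr_col_mx row_mx0.
have BtlBtQ : Btl *m BtQ^T = 0 by rewrite -{1}(trmxK Btl) -trmx_mul BtQBtl trmx0.
have BtBr : Bt *m Br^T = 0 by rewrite -{1}(trmxK Bt) -trmx_mul BrBt trmx0.
have W : Bt *m Bt^T = block_mx Z 0 0 0.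
  by rewrite /Bt tr_col_mx mul_col_row BtlBtQ BtQBtl BtQBtQ.
have rkW : \rank (Bt *m Bt^T) = tl by rewrite W rank_diag_block_mx mxrank0 addn0 mxrank_unit.
have HH : H *m H^T = block_mx (Br *m Br^T) 0 0 (Bt *m Bt^T).
  by rewrite /H tr_col_mx mul_col_row BrBt BtBr.
have rkH : c = (\rank (Br *m Br^T) + tl)%N by rewrite /c HH rank_diag_block_mx rkW.
have frH : row_free H.
  have := dir; rewrite mxdirectE /= => /eqP rk.
  by rewrite /row_free /H -addsmxE rk (eqP frBr) (eqP frBt).
have frDA : row_free DA.
  rewrite -kermx_eq0; apply/rowV0P => v; rewrite sub_kermx => /eqP vDA.
  rewrite -[v]hsubmxK -[lsubmx v]hsubmxK in vDA *.
  move: (lsubmx (lsubmx v)) (rsubmx (lsubmx v)) (rsubmx v) vDA => a b c0.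
  rewrite /DA /DAmx !mul_row_col !mul_mx_row !mulmx0 !add_row_mx -[0 in RHS]row_mx0.
  case/eq_row_mx => E1 E2.
  have : row_mx b a *m H = 0 *m H by rewrite mul0mx /H mul_row_col addrC -E1 addr0.
  move=> E4; move: (row_free_inj frH E4); rewrite -[0 in RHS]row_mx0 => /eq_row_mx[? ?]; subst a b.
  move: E2; rewrite !mul0mx !add0r -(mul0mx _ Br) => E3; rewrite (row_free_inj frBr E3).
  by rewrite !row_mx0.
have rkDA : \rank DA = (tl + tQ + r + r)%N by apply/eqP.
have T1 : A *m Bt *m Bt^T = block_mx A0 0 0 (0 : 'M_tQ).
  by rewrite -mulmxA W /A mulmx_block !mulmx0 !mul0mx !addr0 -mulmxA mulVmx // mulmx1.
have T2 : Bt *m (A *m Bt)^T = block_mx A0^T 0 0 (0 : 'M_tQ).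
  rewrite trmx_mul mulmxA W /A tr_block_mx !trmx0 mulmx_block !mulmx0 !mul0mx !addr0.
  by rewrite trmx_mul trmx_inv Zsym mulmxA mulmxV // mul1mx.
set R := Br *m Br^T.
set S := block_mx (A0^T - A0) 0 0 (0 : 'M_tQ).
have DJ : DA *m Jmx F n = col_mx (col_mx (row_mx (-(A *m Bt)) Bt) (row_mx 0 Br)) (row_mx (-Br) 0).
  by rewrite /DA /DAmx /Jmx !mul_col_mx !mul_row_block !mulmx0 !mul0mx !mulmx1 !mulmxN !mulmx1 !addr0 !add0r ?oppr0.
have GM : DA *m (Jmx F n *m DA^T) = col_mx (col_mx (row_mx (row_mx S 0) 0) (row_mx (row_mx 0 0) R)) (row_mx (row_mx 0 (-R)) 0).
  have Sdef : - (A *m Bt *m Bt^T) + Bt *m (A *m Bt)^T = S.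
    by rewrite T1 T2 opp_block_mx add_block_mx !oppr0 !addr0 addrC.
  have ABr : A *m Bt *m Br^T = 0 by rewrite -mulmxA BtBr mulmx0.
  have BrA : Br *m (A *m Bt)^T = 0 by rewrite trmx_mul mulmxA BrBt mul0mx.
  rewrite mulmxA DJ /DA /DAmx; move: (A *m Bt) Sdef ABr BrA => AB Sdef ABr BrA.
  rewrite !tr_col_mx !tr_row_mx !trmx0 !mul_col_mx !mul_mx_row !mul_row_col.
  rewrite !mulNmx Sdef ABr BrA BtBr !mulmx0 !mul0mx ?oppr0 !addr0 !add0r.
  by rewrite BrBt oppr0.
have rkS : \rank S = \rank (A0 - A0^T).
  by rewrite rank_diag_block_mx mxrank0 addn0 -opprB (eqmx_opp (A0 - A0^T)).
have cDE : cD DA = cp.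
  rewrite /cD /sdual -(mxrank_mul_ker DA (Jmx F n *m DA^T)) addnK GM rank_GM.
  rewrite /cp rkH addnK rkS -addnA addnn halfD odd_double andbF add0n doubleK addnC.
  by [].
have kDE : kD DA = (n%:Z - (2 * r)%:Z - (tl + tQ)%:Z + cp%:Z)%R.
  rewrite /kD cDE rkDA; lia.
split => //; first by rewrite rkW.
move=> v vS vN.
have v0 : v != 0 by apply: contraNneq vN => ->; rewrite sub0mx.
set x := lsubmx v; set y := rsubmx v.
have vE : v = row_mx x y by rewrite hsubmxK.
have H1 : row_mx x y *m (Jmx F n *m DA^T) = 0 by rewrite -vE; apply/eqP; rewrite -sub_kermx.
rewrite mulmxA /Jmx mul_row_block !mulmx0 !add0r !addr0 mulmx1 mulmxN mulmx1 /DA /DAmx in H1.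
rewrite !tr_col_mx !tr_row_mx !trmx0 !mul_mx_row !mul_row_col ?mulmx0 ?mul0mx ?addr0 ?add0r in H1.
rewrite -!row_mx0 in H1; case/eq_row_mx: H1 => /eq_row_mx[E1 E2] E3.
have yBr : y *m Br^T = 0 by move: E2; rewrite mulNmx => /eqP; rewrite oppr_eq0 => /eqP.
have yBt : y *m Bt^T = x *m Bt^T *m A^T.
  by move: E1; rewrite row_mx0 mulNmx addrC => /eqP; rewrite subr_eq0 trmx_mul mulmxA => /eqP <-.
have F0 : (0 < #|F|)%N by apply/card_gt0P; exists 0.
case: (eqVneq (x *m Bt^T) 0) => [a0|a0].
  have xH : (x <= edual H)%MS by rewrite /edual sub_kermx /H tr_col_mx mul_mx_row E3 a0 row_mx0.
  have yH : (y <= edual H)%MS.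
    by rewrite /edual sub_kermx /H tr_col_mx mul_mx_row yBr yBt a0 mul0mx row_mx0.
  rewrite ge_min; apply/orP; left; rewrite lez_nat.
  case: (eqVneq x 0) => [x0|xn0].
    have yn0 : y != 0 by apply: contraNneq v0 => y0; rewrite vE x0 y0 row_mx0.
    apply: leq_trans (dH_le yH yn0) _; apply: subset_leq_card; apply/subsetP => j.
    by rewrite !inE => ->; rewrite orbT.
  apply: leq_trans (dH_le xH xn0) _; apply: subset_leq_card; apply/subsetP => j.
  by rewrite !inE => ->.
rewrite ge_min; apply/orP; right.
apply: ceil_bound => //.
rewrite -(count_key x y) mulnDl mul1n addnC; apply: leq_add.
  apply: dH_le; first by rewrite /edual sub_kermx E3.
  by apply: contraNneq a0 => ->; rewrite mul0mx.
have -> : (#|F| * dH (edual Br) = \sum_(l : F) dH (edual Br))%N.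
  by rewrite sum_nat_const; congr (_ * _)%N; apply: eq_card.
apply: leq_sum => l _; apply: dH_le.
  by rewrite /edual sub_kermx mulmxBl -scalemxAl E3 yBr scaler0 subr0.
apply/eqP => e.
have Ul : (A - l%:M) \in unitmx.
  by move: (noeig l); rewrite /eigenvalue /eigenspace negbK kermx_eq0 row_free_unit.
have : x *m Bt^T *m (A - l%:M)^T = 0.
  have : (y - l *: x) *m Bt^T = 0 by rewrite e mul0mx.
  by rewrite mulmxBl -scalemxAl yBt linearB /= tr_scalar_mx mulmxBr mul_mx_scalar.
move/(congr1 (mulmx^~ (invmx (A - l%:M)^T))); rewrite mul0mx -!mulmxA mulmxV ?unitmx_tr // mulmx1.
by move/eqP; rewrite (negbTE a0).
Qed.
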